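(* Let $(\mathfrak g,[\cdot,\cdot],[\![\cdot,\cdot,\cdot]\!])$ be a Lie-Yamaguti algebra. Then there exists a compatible pre-Lie-Yamaguti algebra structure on $\mathfrak g$ if and only if there exists an invertible relative Rota-Baxter operator $T:V\to\mathfrak g$ on $\mathfrak g$ with respect to some representation $(V;\rho,\mu)$ of $\mathfrak g$.
   Context: All vector spaces are over a field of characteristic $0$. A Lie-Yamaguti algebra is a vector space $\mathfrak g$ with a bilinear skew-symmetric $[\cdot,\cdot]$ and a trilinear $[\![\cdot,\cdot,\cdot]\!]$ skew-symmetric in its first two arguments such that for all $x,y,z,w,t$: (1) $[[x,y],z]+[[y,z],x]+[[z,x],y]+[\![x,y,z]\!]+[\![y,z,x]\!]+[\![z,x,y]\!]=0$; (2) $[\![[x,y],z,w]\!]+[\![[y,z],x,w]\!]+[\![[z,x],y,w]\!]=0$; (3) $[\![x,y,[z,w]]\!]=[[\![x,y,z]\!],w]+[z,[\![x,y,w]\!]]$; (4) $[\![x,y,[\![z,w,t]\!]]\!]=[\![[\![x,y,z]\!],w,t]\!]+[\![z,[\![x,y,w]\!],t]\!]+[\![z,w,[\![x,y,t]\!]]\!]$. A representation $(V;\rho,\mu)$ of $\mathfrak g$ is a linear $\rho:\mathfrak g\to\mathfrak{gl}(V)$ and bilinear $\mu:\otimes^2\mathfrak g\to\mathfrak{gl}(V)$ such that, with $D_{\rho,\mu}(x,y):=\mu(y,x)-\mu(x,y)+[\rho(x),\rho(y)]-\rho([x,y])$: $\mu([x,y],z)-\mu(x,z)\rho(y)+\mu(y,z)\rho(x)=0$;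 $\mu(x,[y,z])-\rho(y)\mu(x,z)+\rho(z)\mu(x,y)=0$; $\rho([\![x,y,z]\!])=[D_{\rho,\mu}(x,y),\rho(z)]$; $\mu(z,w)\mu(x,y)-\mu(y,w)\mu(x,z)-\mu(x,[\![y,z,w]\!])+D_{\rho,\mu}(y,z)\mu(x,w)=0$; $\mu([\![x,y,z]\!],w)+\mu(z,[\![x,y,w]\!])=[D_{\rho,\mu}(x,y),\mu(z,w)]$. A relative Rota-Baxter operator on $\mathfrak g$ with respect to $(V;\rho,\mu)$ is a linear map $T:V\to\mathfrak g$ with $[Tu,Tv]=T(\rho(Tu)v-\rho(Tv)u)$ and $[\![Tu,Tv,Tw]\!]=T(D_{\rho,\mu}(Tu,Tv)w+\mu(Tv,Tw)u-\mu(Tu,Tw)v)$ for all $u,v,w\in V$. A pre-Lie-Yamaguti algebra is a vector space $A$ with a bilinear operation $*$ and a trilinear operation $\{\cdot,\cdot,\cdot\}$ such that, writing $[x,y]_C=x*y-y*x$, $(x,y,z)=(x*y)*z-x*(y*z)$ and $\{x,y,z\}_D=\{z,y,x\}-\{z,x,y\}+(y,x,z)-(x,y,z)$, for all $x,y,z,w,t\in A$: (P1) $\{z,[x,y]_C,w\}-\{y*z,x,w\}+\{x*z,y,w\}=0$; (P2) $\{x,y,[z,w]_C\}=z*\{x,y,w\}-w*\{x,y,z\}$; (P3) $\{\{x,y,z\},w,t\}-\{\{x,y,w\},z,t\}-\{x,y,\{z,w,t\}_D\}-\{x,y,\{z,w,t\}\}+\{x,y,\{w,z,t\}\}+\{z,w,\{x,y,t\}\}_D=0$;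 (P4) $\{z,\{x,y,w\}_D,t\}+\{z,\{x,y,w\},t\}-\{z,\{y,x,w\},t\}+\{z,w,\{x,y,t\}_D\}+\{z,w,\{x,y,t\}\}-\{z,w,\{y,x,t\}\}=\{x,y,\{z,w,t\}\}_D-\{\{x,y,z\}_D,w,t\}$; (P5) $\{x,y,z\}_D*w+\{x,y,z\}*w-\{y,x,z\}*w=\{x,y,z*w\}_D-z*\{x,y,w\}_D$. A compatible pre-Lie-Yamaguti algebra structure on the Lie-Yamaguti algebra $\mathfrak g$ is a pre-Lie-Yamaguti algebra structure $( *,\{\cdot,\cdot,\cdot\})$ on the vector space $\mathfrak g$ such that $[x,y]=x*y-y*x$ and $[\![x,y,z]\!]=\{x,y,z\}_D+\{x,y,z\}-\{y,x,z\}$ for all $x,y,z\in\mathfrak g$. *)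

(* Defs.v *)
From HB Require Import structures.
From mathcomp Require Import all_boot all_order all_algebra.
Set Implicit Arguments. Unset Strict Implicit. Unset Printing Implicit Defensive.
Import GRing.Theory.
Local Open Scope ring_scope.

Section Defs.
Variable K : fieldType.

Definition is_linear (U W : lmodType K) (f : U -> W) : Prop :=
  forall (a : K) (x y : U), f (a *: x + y) = a *: f x + f y.

Definition is_bilinear (U1 U2 W : lmodType K) (f : U1 -> U2 -> W) : Prop :=
  (forall y, is_linear (fun x => f x y)) /\ (forall x, is_linear (f x)).

Definition is_trilinear (U1 U2 U3 W : lmodType K) (f : U1 -> U2 -> U3 -> W)
  : Prop :=
  (forall y z, is_linear (fun x => f x y z)) /\
  (forall x z, is_linear (fun y => f x y z)) /\
  (forall x y, is_linear (f x y)).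

Definition LieYamaguti (g : lmodType K) (br : g -> g -> g)
  (tr : g -> g -> g -> g) : Prop :=
  [/\ is_bilinear br, is_trilinear tr,
      (forall x y, br x y = - br y x),
      (forall x y z, tr x y z = - tr y x z) &
  [/\ (forall x y z,
        br (br x y) z + br (br y z) x + br (br z x) y
        + tr x y z + tr y z x + tr z x y = 0),
      (forall x y z w,
        tr (br x y) z w + tr (br y z) x w + tr (br z x) y w = 0),
      (forall x y z w,
        tr x y (br z w) = br (tr x y z) w + br z (tr x y w)) &
      (forall x y z w t,
        tr x y (tr z w t)
        = tr (tr x y z) w t + tr z (tr x y w) t + tr z w (tr x y t))]].

(* rho : g -> gl(V), mu : g (x) g -> gl(V); endomorphisms are functions
   V -> V, required to be linear; equalities in gl(V) are stated pointwise. *)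
Definition Drm (g V : lmodType K) (br : g -> g -> g) (rho : g -> V -> V)
  (mu : g -> g -> V -> V) (x y : g) (v : V) : V :=
  mu y x v - mu x y v + rho x (rho y v) - rho y (rho x v) - rho (br x y) v.

Definition LYrep (g V : lmodType K) (br : g -> g -> g)
  (tr : g -> g -> g -> g) (rho : g -> V -> V) (mu : g -> g -> V -> V) : Prop :=
  let D := Drm br rho mu in
  [/\ (forall x, is_linear (rho x)),
      (forall v, is_linear (fun x => rho x v)),
      (forall x y, is_linear (mu x y)),
      (forall v, is_bilinear (fun x y => mu x y v)) &
  [/\ (forall x y z v,
        mu (br x y) z v - mu x z (rho y v) + mu y z (rho x v) = 0),
      (forall x y z v,
        mu x (br y z) v - rho y (mu x z v) + rho z (mu x y v) = 0),
      (forall x y z v,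
        rho (tr x y z) v = D x y (rho z v) - rho z (D x y v)),
      (forall x y z w v,
        mu z w (mu x y v) - mu y w (mu x z v) - mu x (tr y z w) v
        + D y z (mu x w v) = 0) &
      (forall x y z w v,
        mu (tr x y z) w v + mu z (tr x y w) v
        = D x y (mu z w v) - mu z w (D x y v))]].

Definition relRB (g V : lmodType K) (br : g -> g -> g)
  (tr : g -> g -> g -> g) (rho : g -> V -> V) (mu : g -> g -> V -> V)
  (T : V -> g) : Prop :=
  [/\ is_linear T,
      (forall u v, br (T u) (T v) = T (rho (T u) v - rho (T v) u)) &
      (forall u v w, tr (T u) (T v) (T w)
        = T (Drm br rho mu (T u) (T v) w + mu (T v) (T w) u
             - mu (T u) (T w) v))].

Definition assoc3 (A : lmodType K) (m : A -> A -> A) (x y z : A) : A :=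
  m (m x y) z - m x (m y z).

Definition braceD (A : lmodType K) (m : A -> A -> A) (br3 : A -> A -> A -> A)
  (x y z : A) : A :=
  br3 z y x - br3 z x y + assoc3 m y x z - assoc3 m x y z.

Definition preLY (A : lmodType K) (m : A -> A -> A)
  (b : A -> A -> A -> A) : Prop :=
  let C x y := m x y - m y x in
  let bD := braceD m b in
  [/\ is_bilinear m, is_trilinear b &
  [/\ (forall x y z w, b z (C x y) w - b (m y z) x w + b (m x z) y w = 0),
      (forall x y z w, b x y (C z w) = m z (b x y w) - m w (b x y z)),
      (forall x y z w t,
        b (b x y z) w t - b (b x y w) z t - b x y (bD z w t) - b x y (b z w t)
        + b x y (b w z t) + bD z w (b x y t) = 0),
      (forall x y z w t,
        b z (bD x y w) t + b z (b x y w) t - b z (b y x w) t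
        + b z w (bD x y t) + b z w (b x y t) - b z w (b y x t)
        = bD x y (b z w t) - b (bD x y z) w t) &
      (forall x y z w,
        m (bD x y z) w + m (b x y z) w - m (b y x z) w
        = bD x y (m z w) - m z (bD x y w))]].

Definition compatible_preLY (g : lmodType K) (br : g -> g -> g)
  (tr : g -> g -> g -> g) (m : g -> g -> g) (b : g -> g -> g -> g) : Prop :=
  [/\ preLY m b,
      (forall x y, br x y = m x y - m y x) &
      (forall x y z, tr x y z = braceD m b x y z + b x y z - b y x z)].

End Defs.

(* Main.v *)
Require Import Defs.
From HB Require Import structures.
From mathcomp Require Import all_boot all_order all_algebra.
Import GRing.Theory.
Local Open Scope ring_scope.

Inductive aexpr := AAt of nat | AZero | AAdd of aexpr & aexpr | AOpp of aexpr.

Fixpoint aeval {V : zmodType} (env : seq V) (e : aexpr) : V :=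
  match e with
  | AAt n => nth 0 env n
  | AZero => 0
  | AAdd a b => aeval env a + aeval env b
  | AOpp a => - aeval env a
  end.

Fixpoint acoef (e : aexpr) (n : nat) : int :=
  match e with
  | AAt m => Posz (nat_of_bool (m == n))
  | AZero => 0
  | AAdd a b => acoef a n + acoef b n
  | AOpp a => - acoef a n
  end.

Lemma aeval_sum (V : zmodType) (env : seq V) e :
  aeval env e = \sum_(i < size env) nth 0 env i *~ acoef e i.
Proof.
elim: e => [n||a iha b ihb|a iha] /=.
- case: (ltnP n (size env)) => hn.
    rewrite (bigD1 (Ordinal hn)) //= eqxx mulr1z big1 ?addr0 // => i hi.
    rewrite (_ : (n == i) = false) ?mulr0z //; apply/negbTE.
    by rewrite eq_sym; apply: contra hi => /eqP h; apply/eqP; apply: val_inj.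
  rewrite nth_default // big1 // => i _.
  rewrite (_ : (n == i) = false) ?mulr0z //; apply/negbTE.
  by rewrite neq_ltn (leq_trans (ltn_ord i) hn) orbT.
- by rewrite big1 // => i _; rewrite mulr0z.
- by rewrite iha ihb -big_split /=; apply: eq_bigr => i _; rewrite mulrzDr.
- by rewrite iha -sumrN; apply: eq_bigr => i _; rewrite mulrNz.
Qed.

Lemma abel_ok (V : zmodType) (env : seq V) e1 e2 :
  all (fun i => acoef e1 i == acoef e2 i) (iota 0 (size env)) ->
  aeval env e1 = aeval env e2.
Proof.
move=> /allP h; rewrite !aeval_sum; apply: eq_bigr => i _.
by rewrite (eqP (h i _)) // mem_iota leq0n add0n ltn_ord.
Qed.

Ltac ab_find x env :=
  match env with
  | ?y :: _ => let _ := match goal with _ => constr_eq x y end in constr:(0%N)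
  | _ :: ?r => let n := ab_find x r in constr:(n.+1)
  end.
Ltac ab_collect env t :=
  lazymatch t with
  | (?a + ?b)%R => let e1 := ab_collect env a in ab_collect e1 b
  | (- ?a)%R => ab_collect env a
  | 0%R => env
  | _ => constr:(t :: env)
  end.
Ltac ab_reify env t :=
  lazymatch t with
  | (?a + ?b)%R => let x := ab_reify env a in let y := ab_reify env b in
                   constr:(AAdd x y)
  | (- ?a)%R => let x := ab_reify env a in constr:(AOpp x)
  | 0%R => constr:(AZero)
  | _ => let n := ab_find t env in constr:(AAt n)
  end.
Ltac abel := lazymatch goal with |- @eq ?V ?l ?r =>
  let env0 := constr:(@nil V) in
  let e1 := ab_collect env0 l in let env := ab_collect e1 r in
  let a := ab_reify env l in let b := ab_reify env r in
  change (aeval env a = aeval env b); apply: abel_ok; exact (erefl true) end.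

Lemma use_eq (V : zmodType) (a b c d : V) : a = b -> c - d = a - b -> c = d.
Proof. by move=> ab h; apply/eqP; rewrite -subr_eq0 h ab subrr. Qed.
Lemma use_eqN (V : zmodType) (a b c d : V) : a = b -> c - d = b - a -> c = d.
Proof. by move=> ab h; apply/eqP; rewrite -subr_eq0 h ab subrr. Qed.
Arguments use_eq {V a b c d}.
Arguments use_eqN {V a b c d}.
Ltac useH H := first [ apply: (use_eq H); abel | apply: (use_eqN H); abel ].

Section Lin.
Variables (K : fieldType) (U W : lmodType K) (f : U -> W).
Hypothesis hf : is_linear f.
Lemma linD x y : f (x + y) = f x + f y.
Proof. by have := hf 1 x y; rewrite !scale1r. Qed.
Lemma lin0 : f 0 = 0.
Proof. by have := linD 0 0; rewrite addr0 => /(congr1 (fun z => z - f 0)); rewrite subrr addrK. Qed.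
Lemma linN x : f (- x) = - f x.
Proof. by have := hf (-1) x 0; rewrite !addr0 lin0 addr0 !scaleN1r => ->. Qed.
End Lin.
Arguments linD {K U W f} hf x y.
Arguments lin0 {K U W f} hf.
Arguments linN {K U W f} hf x.

Lemma lin_comp (K : fieldType) (U V W : lmodType K) (f : V -> W) (g : U -> V) :
  is_linear f -> is_linear g -> is_linear (fun x => f (g x)).
Proof. by move=> hf hg a x y; rewrite hg hf. Qed.

Arguments lin_comp {K U V W f g}.

Theorem proposition3p15 (K : fieldType) (char0 : [pchar K] =i pred0)
  (g : lmodType K) (br : g -> g -> g) (tr : g -> g -> g -> g) :
  LieYamaguti br tr ->
  ((exists (m : g -> g -> g) (b : g -> g -> g -> g), compatible_preLY br tr m b)
   <->
   (exists (V : lmodType K) (rho : g -> V -> V) (mu : g -> g -> V -> V)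
           (T : V -> g),
      LYrep br tr rho mu /\ relRB br tr rho mu T /\ bijective T)).
Proof.
move=> _; split.
- case=> m [b [[[hm1 hm2] [hb1 [hb2 hb3]] [P1 P2 P3 P4 P5]] hbr htr]].
  have mD1 x y v : m (x + y) v = m x v + m y v := linD (hm1 v) x y.
  have mN1 x v : m (- x) v = - m x v := linN (hm1 v) x.
  have mD2 x u v : m x (u + v) = m x u + m x v := linD (hm2 x) u v.
  have mN2 x u : m x (- u) = - m x u := linN (hm2 x) u.
  have bD1 x y z w : b (x + y) z w = b x z w + b y z w := linD (hb1 z w) x y.
  have bN1 x z w : b (- x) z w = - b x z w := linN (hb1 z w) x.
  have bD2 x y z w : b x (y + z) w = b x y w + b x z w := linD (hb2 x w) y z.
  have bN2 x z w : b x (- z) w = - b x z w := linN (hb2 x w) z.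
  have bD3 x y z w : b x y (z + w) = b x y z + b x y w := linD (hb3 x y) z w.
  have bN3 x y w : b x y (- w) = - b x y w := linN (hb3 x y) w.
  exists g, m, (fun x y v => b v x y), id.
  split; [|split].
  + split.
    * exact: hm2.
    * exact: hm1.
    * by move=> x y; apply: hb1.
    * by move=> v; split=> [y|x]; [apply: hb2 | apply: hb3].
    * split.
      -- move=> x y z v /=. move: (P1 x y v z) => /=.
         rewrite ?hbr ?(mD1,mN1,mD2,mN2,bD1,bN1,bD2,bN2,bD3,bN3) => H; useH H.
      -- move=> x y z v /=. move: (P2 v x y z) => /=.
         rewrite ?hbr ?(mD1,mN1,mD2,mN2,bD1,bN1,bD2,bN2,bD3,bN3) => H; useH H.
      -- move=> x y z v /=. move: (P5 x y z v) => /=.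
         rewrite /Drm /braceD /assoc3 ?htr /braceD /assoc3 ?hbr.
         rewrite ?(mD1,mN1,mD2,mN2,bD1,bN1,bD2,bN2,bD3,bN3) => H; useH H.
      -- move=> x y z w v /=. move: (P3 v x y z w) => /=.
         rewrite /Drm /braceD /assoc3 ?htr /braceD /assoc3 ?hbr.
         rewrite ?(mD1,mN1,mD2,mN2,bD1,bN1,bD2,bN2,bD3,bN3) => H; useH H.
      -- move=> x y z w v /=. move: (P4 x y v z w) => /=.
         rewrite /Drm /braceD /assoc3 ?htr /braceD /assoc3 ?hbr.
         rewrite ?(mD1,mN1,mD2,mN2,bD1,bN1,bD2,bN2,bD3,bN3) => H; useH H.
  + split.
    * by [].
    * by move=> u v /=; rewrite hbr.
    * move=> u v w /=; rewrite htr /Drm /braceD /assoc3 ?hbr.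
      rewrite ?(mD1,mN1,mD2,mN2,bD1,bN1,bD2,bN2,bD3,bN3); abel.
  + by exists id.
- case=> V [rho [mu [T [[hr1 hr2 hmu1 hmu2 [A1 A2 A3 A4 A5]] [[hT RB1 RB2] [S STK TSK]]]]]].
  have hS : is_linear S.
    move=> a x y; apply: (can_inj STK); by rewrite hT !TSK.
  have rD1 x y v : rho (x + y) v = rho x v + rho y v := linD (hr2 v) x y.
  have rN1 x v : rho (- x) v = - rho x v := linN (hr2 v) x.
  have rD2 x u v : rho x (u + v) = rho x u + rho x v := linD (hr1 x) u v.
  have rN2 x u : rho x (- u) = - rho x u := linN (hr1 x) u.
  have muD1 x y z v : mu (x + y) z v = mu x z v + mu y z v := linD ((hmu2 v).1 z) x y.
  have muN1 x z v : mu (- x) z v = - mu x z v := linN ((hmu2 v).1 z) x.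
  have muD2 x y z v : mu x (y + z) v = mu x y v + mu x z v := linD ((hmu2 v).2 x) y z.
  have muN2 x z v : mu x (- z) v = - mu x z v := linN ((hmu2 v).2 x) z.
  have muD3 x y u v : mu x y (u + v) = mu x y u + mu x y v := linD (hmu1 x y) u v.
  have muN3 x y u : mu x y (- u) = - mu x y u := linN (hmu1 x y) u.
  have TD u v : T (u + v) = T u + T v := linD hT u v.
  have TN u : T (- u) = - T u := linN hT u.
  have T0 : T 0 = 0 := lin0 hT.
  have SD u v : S (u + v) = S u + S v := linD hS u v.
  have SN u : S (- u) = - S u := linN hS u.
  have S0 : S 0 = 0 := lin0 hS.
  have RB1' x y : br x y = T (rho x (S y) - rho y (S x)).
    by rewrite -{1}(TSK x) -{1}(TSK y) RB1 !TSK.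
  have RB2' x y z : tr x y z = T (Drm br rho mu x y (S z) + mu y z (S x) - mu x z (S y)).
    by rewrite -{1}(TSK x) -{1}(TSK y) -{1}(TSK z) RB2 !TSK.
  have Sinj := can_inj TSK.
  exists (fun x y => T (rho x (S y))), (fun x y z => T (mu y z (S x))).
  split; [split; [| |split]| |].
  + split=> [y|x]; first exact: (lin_comp hT (hr2 (S y))).
    exact: (lin_comp hT (lin_comp (hr1 x) hS)).
  + split; [|split].
    * move=> y z; exact: (lin_comp hT (lin_comp (hmu1 y z) hS)).
    * move=> x z; exact: (lin_comp hT ((hmu2 (S x)).1 z)).
    * move=> x y; exact: (lin_comp hT ((hmu2 (S x)).2 y)).
  + move=> x y z w /=; apply: Sinj; move: (A1 x y w (S z)).
    rewrite ?RB1' ?(TD,TN,T0,SD,SN,S0,STK,TSK,rD1,rN1,rD2,rN2,muD1,muN1,muD2,muN2,muD3,muN3) => H; useH H.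
  + move=> x y z w /=; apply: Sinj; move: (A2 y z w (S x)).
    rewrite ?RB1' ?(TD,TN,T0,SD,SN,S0,STK,TSK,rD1,rN1,rD2,rN2,muD1,muN1,muD2,muN2,muD3,muN3) => H; useH H.
  + move=> x y z w t /=; apply: Sinj; move: (A4 y z w t (S x)).
    rewrite /braceD /assoc3 ?RB2' /Drm ?RB1' ?(TD,TN,T0,SD,SN,S0,STK,TSK,rD1,rN1,rD2,rN2,muD1,muN1,muD2,muN2,muD3,muN3) => H; useH H.
  + move=> x y z w t /=; apply: Sinj; move: (A5 x y w t (S z)).
    rewrite /braceD /assoc3 ?RB2' /Drm ?RB1' ?(TD,TN,T0,SD,SN,S0,STK,TSK,rD1,rN1,rD2,rN2,muD1,muN1,muD2,muN2,muD3,muN3) => H; useH H.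
  + move=> x y z w /=; apply: Sinj; move: (A3 x y z (S w)).
    rewrite /braceD /assoc3 ?RB2' /Drm ?RB1' ?(TD,TN,T0,SD,SN,S0,STK,TSK,rD1,rN1,rD2,rN2,muD1,muN1,muD2,muN2,muD3,muN3) => H; useH H.
  + move=> x y /=; apply: Sinj.
    rewrite ?RB1' ?(TD,TN,T0,SD,SN,S0,STK,TSK,rD1,rN1,rD2,rN2,muD1,muN1,muD2,muN2,muD3,muN3); abel.
  + move=> x y z /=; apply: Sinj.
    rewrite /braceD /assoc3 ?RB2' /Drm ?RB1' ?(TD,TN,T0,SD,SN,S0,STK,TSK,rD1,rN1,rD2,rN2,muD1,muN1,muD2,muN2,muD3,muN3); abel.
Qed.
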